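(* Let $K$ be a field, $S=K[X_1,\ldots,X_n]$, $I\subset S$ a monomial ideal, $R=S/I$, and let $x_i$ denote the image of $X_i$ in $R$. Let $x=x_{i_1}\cdots x_{i_r}$ with $1\le i_1<\cdots<i_r\le n$, and set $F=\{i_1,\ldots,i_r\}$. Then for every $a\in\mathbb{Z}^n$ we have $\dim_K (R_x)_a\le 1$, and the following are equivalent: (i) $(R_x)_a\cong K$; (ii) $F\supset G_a$, and for every $u\in G(I)$ there exists $j\notin F$ such that $\nu_j(u)>a_j\ge 0$.
   Context: $S$ and $R$ carry the $\mathbb{Z}^n$-grading with $\deg X_i=e_i$ (the $i$-th unit vector); $R_x$ denotes the localization of $R$ at the element $x$ (equivalently at $x_{i_1},\ldots,x_{i_r}$), with the induced $\mathbb{Z}^n$-grading, and $(R_x)_a$ is its component of degree $a$. $G(I)$ is the minimal set of monomial generators of $I$. For a monomial $u=X_1^{c_1}\cdots X_n^{c_n}$, $\nu_j(u)=c_j$. For $a=(a_1,\ldots,a_n)\in\mathbb{Z}^n$, $G_a=\{i\mid a_i<0\}$. *)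

(* Defs.v *)
From mathcomp Require Import all_boot all_algebra.
From mathcomp Require Export mpoly.
Set Implicit Arguments. Unset Strict Implicit. Unset Printing Implicit Defensive.
Import GRing.Theory.
Local Open Scope ring_scope.

Definition ideal_gen (K : fieldType) (n : nat) (P : {mpoly K[n]} -> Prop)
  : {mpoly K[n]} -> Prop :=
  fun f => exists s : seq ({mpoly K[n]} * {mpoly K[n]}),
    (forall p, p \in s -> P p.2) /\ f = \sum_(p <- s) p.1 * p.2.

(* The monomial ideal generated by the monomials X^m, m in M. Every monomial
   ideal of S is of this form. *)
Definition monomial_ideal (K : fieldType) (n : nat) (M : 'X_{1..n} -> Prop)
  : {mpoly K[n]} -> Prop :=
  ideal_gen (fun g => exists m, M m /\ g = 'X_[m]).

Definition mingen (K : fieldType) (n : nat) (I : {mpoly K[n]} -> Prop)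
  (u : 'X_{1..n}) : Prop :=
  I 'X_[u] /\
  forall v : 'X_{1..n}, I 'X_[v] -> (forall i, (v i <= u i)%N) -> v = u.

(* The monomial X_F = prod_{i in F} X_i (a representative of x in S). *)
Definition xF (K : fieldType) (n : nat) (F : {set 'I_n}) : {mpoly K[n]} :=
  \prod_(i in F) 'X_i.

(* Elements of the localization R_x (R = S/I) are represented by fractions
   f / x^k, encoded as pairs (f, k) with f in S, k in nat. *)
Definition loc_equiv (K : fieldType) (n : nat) (I : {mpoly K[n]} -> Prop)
  (F : {set 'I_n}) (p q : {mpoly K[n]} * nat) : Prop :=
  exists m : nat,
    I (xF K F ^+ m * (p.1 * xF K F ^+ q.2 - q.1 * xF K F ^+ p.2)).

Definition loc_zero (K : fieldType) (n : nat) : {mpoly K[n]} * nat := (0, 0%N).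

Definition loc_lincomb (K : fieldType) (n : nat) (F : {set 'I_n}) (c d : K)
  (p q : {mpoly K[n]} * nat) : {mpoly K[n]} * nat :=
  ((c *: p.1) * xF K F ^+ q.2 + (d *: q.1) * xF K F ^+ p.2, (p.2 + q.2)%N).

Definition loc_scale (K : fieldType) (n : nat) (c : K)
  (p : {mpoly K[n]} * nat) : {mpoly K[n]} * nat := (c *: p.1, p.2).

(* The fraction f / x^k lies in (R_x)_a (a in Z^n) when f is homogeneous
   of multidegree a + k * deg x, where deg x = sum_{i in F} e_i.
   (R_x)_a is exactly the set of classes of such fractions. *)
Definition loc_deg (K : fieldType) (n : nat) (F : {set 'I_n}) (a : 'I_n -> int)
  (p : {mpoly K[n]} * nat) : Prop :=
  forall m : 'X_{1..n}, m \in msupp p.1 ->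
    forall i : 'I_n, (m i)%:Z = a i + (p.2 * (i \in F))%:Z.

(* Main.v *)
Require Import Defs.
From mathcomp Require Import all_boot all_algebra.
From mathcomp Require Import all_order mpoly zify.
From Stdlib Require Import Classical.
Import Order.TTheory GRing.Theory Num.Theory.
Local Open Scope ring_scope.

Section Aux.
Context {K : fieldType} {n : nat} {M : 'X_{1..n} -> Prop}.
Local Notation I := (@monomial_ideal K n M).

Definition mF (F : {set 'I_n}) : 'X_{1..n} := (\big[+%MM/0%MM]_(i in F) U_(i))%MM.

Lemma xFE F : xF K F = 'X_[mF F].
Proof. by rewrite /xF /mF (big_morph (@mpolyX n K) (@mpolyXD _ _) (@mpolyX0 _ _)). Qed.

Lemma mFE F j : mF F j = (j \in F).
Proof.
rewrite /mF mnm_sumE; case: (boolP (j \in F)) => jF.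
  rewrite (bigD1 j) //= mnm1E eqxx big1 // => i /andP[_ ij].
  by rewrite mnm1E (negbTE ij).
by rewrite big1 // => i iF; rewrite mnm1E; case: eqP => // ij; rewrite -ij iF in jF.
Qed.

Lemma xFnE F k : xF K F ^+ k = 'X_[mF F *+ k].
Proof. by rewrite xFE mpolyXn. Qed.

Lemma mFnE F k j : (mF F *+ k)%MM j = (k * (j \in F))%N.
Proof. by rewrite mulmnE mFE mulnC. Qed.

Lemma I0 : I 0.
Proof. by exists [::]; split => //; rewrite big_nil. Qed.

Lemma I_mull f g : I g -> I (f * g).
Proof.
case=> s [Hs ->]; exists [seq (f * p.1, p.2) | p <- s]; split.
  by move=> p /mapP [p0 p0s ->]; have := Hs _ p0s.
by rewrite big_map mulr_sumr; apply: eq_bigr => p _; rewrite mulrA.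
Qed.

Lemma I_div u v : I 'X_[u] -> (u <= v)%MM -> I 'X_[v].
Proof. by move=> Iu uv; rewrite -(submK uv) mpolyXD; apply: I_mull. Qed.

Lemma I_mono_div v : I 'X_[v] -> exists m, M m /\ (m <= v)%MM.
Proof.
case=> s [Hs E]; apply: NNPP => Hn.
have : ('X_[v] : {mpoly K[n]})@_v != 0 by rewrite mcoeffX eqxx oner_neq0.
rewrite E raddf_sum big1_seq ?eqxx // => p /andP[_ ps].
case: (Hs p ps) => m [Mm ->]; apply/eqP; rewrite mcoeff_eq0.
apply/negP; rewrite (perm_mem (msuppMX _ _)) => /mapP [m' _ vE].
by apply: Hn; exists m; split => //; rewrite vE lem_addr.
Qed.

Lemma exists_mingen d v : (mdeg v < d)%N -> I 'X_[v] ->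
  exists u, mingen I u /\ (u <= v)%MM.
Proof.
elim: d v => [//|d IH] v vd Iv.
case: (classic (mingen I v)) => [mv|nmv]; first by exists v; split => //; exact: lepm_refl.
have [v' [Iv' [lev' nev']]] : exists v', I 'X_[v'] /\ (v' <= v)%MM /\ v' <> v.
  apply: NNPP => H; apply: nmv; split => // w Iw wv; apply: NNPP => ne.
  by apply: H; exists w; split => //; split => //; exact/mnm_lepP.
have dv : (mdeg v' < mdeg v)%N.
  have h : mdeg (v - v')%MM != 0%N.
    rewrite mdeg_eq0; apply/negP => /eqP e; apply: nev'; by rewrite -(submK lev') e add0m.
  by rewrite -(submK lev') mdegD; lia.
have [u [mu uv']] := IH v' (leq_trans dv vd) Iv'.
by exists u; split => //; exact: lepm_trans lev'.
Qed.


Lemma I_gen m : M m -> I 'X_[m].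
Proof.
move=> Mm; exists [:: (1, 'X_[m])]; split; last by rewrite big_seq1 mul1r.
by move=> p; rewrite mem_seq1 => /eqP -> /=; exists m.
Qed.

Lemma equiv0 F p : p.1 = 0 -> loc_equiv I F p (loc_zero K n).
Proof. by move=> p0; exists 0%N; rewrite /= p0 !mul0r subrr mulr0; exact: I0. Qed.

Lemma le_mdeg (u : 'X_{1..n}) j : (u j <= mdeg u)%N.
Proof. by rewrite mdegE (bigD1 j) //= leq_addr. Qed.

Lemma loc_deg_form F a (p : {mpoly K[n]} * nat) : loc_deg F a p ->
  p.1 = 0 \/ exists c m, c != 0 /\ p.1 = c *: 'X_[m] /\
     forall i, (m i)%:Z = a i + (p.2 * (i \in F))%:Z.
Proof.
case: p => f k /= H; case: (eqVneq f 0) => [->|nz]; [by left | right].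
have : msupp f != [::] by rewrite msupp_eq0.
case E: (msupp f) => [|m s] // _.
have mi : m \in msupp f by rewrite E mem_head.
have fE : f = f@_m *: 'X_[m].
  have u := msupp_uniq f; rewrite E in u.
  case: s E u => [|m' s'] E u; first by rewrite {1}(mpolyE f) E big_seq1.
  have m'i : m' \in msupp f by rewrite E !inE eqxx orbT.
  have e : m' = m.
    apply/mnmP => i; have := H _ mi i; have := H _ m'i i; lia.
  by move: u; rewrite e /= mem_head.
exists f@_m, m; split; first by rewrite mcoeff_eq0 negbK.
by split => // i; exact: H.
Qed.

End Aux.

Theorem lemma1p1 (K : fieldType) (n : nat) (M : 'X_{1..n} -> Prop)
  (F : {set 'I_n}) (a : 'I_n -> int) :
  let I := @monomial_ideal K n M in
  (* dim_K (R_x)_a <= 1 : any two elements of (R_x)_a are linearly dependent *)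
  (forall p q : {mpoly K[n]} * nat,
      loc_deg F a p -> loc_deg F a q ->
      exists c d : K, (c != 0 \/ d != 0) /\
        loc_equiv I F (loc_lincomb F c d p q) (loc_zero K n)) /\
  (* (i) (R_x)_a ~= K, i.e. (R_x)_a has a one-element basis {p} *)
  ((exists p : {mpoly K[n]} * nat,
       loc_deg F a p /\ ~ loc_equiv I F p (loc_zero K n) /\
       forall q, loc_deg F a q -> exists c : K, loc_equiv I F q (loc_scale c p))
   <->
  (* (ii) G_a subset F, and every u in G(I) has j notin F with nu_j(u) > a_j >= 0 *)
   ((forall i : 'I_n, a i < 0 -> i \in F) /\
    (forall u : 'X_{1..n}, mingen I u ->
       exists j : 'I_n, j \notin F /\ a j < (u j)%:Z /\ 0 <= a j))).
Proof.
move=> I; rewrite {}/I; split.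
  move=> p q Hp Hq.
  case: (loc_deg_form _ _ _ Hp) => [p0|[cp [mp [cp0 [pE pD]]]]].
    exists 1, 0; split; first by left; exact: oner_neq0.
    by apply: equiv0; rewrite /= p0 scaler0 mul0r scale0r mul0r addr0.
  case: (loc_deg_form _ _ _ Hq) => [q0|[cq [mq [cq0 [qE qD]]]]].
    exists 0, 1; split; first by right; exact: oner_neq0.
    by apply: equiv0; rewrite /= q0 scaler0 mul0r scale0r mul0r addr0.
  exists cq, (- cp); split; first by right; rewrite oppr_eq0.
  apply: equiv0; rewrite /= pE qE !xFnE -!scalerAl -!mpolyXD !scalerA.
  have -> : (mq + mF F *+ p.2 = mp + mF F *+ q.2)%MM.
    apply/mnmP => i; rewrite !mnmDE !mFnE.
    move: (pD i) (qD i); case: (i \in F); rewrite ?muln1 ?muln0; lia.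
  by rewrite -scalerDl mulNr mulrC subrr scale0r.
split.
  move=> [p [Hp [Hn Hspan]]].
  case: (loc_deg_form _ _ _ Hp) => [p0|[c [w [c0 [pE wD]]]]].
    by case: Hn; apply: equiv0.
  split.
    move=> i ai; case: (boolP (i \in F)) => // iF; suff : False by [].
    by move: (wD i); rewrite (negbTE iF) muln0; lia.
  move=> u [Iu mu]; apply: NNPP => Hne; apply: Hn; exists (mdeg u).
  rewrite /= pE xFnE expr0 mulr1 mul0r subr0 -scalerAr -mpolyXD -mul_mpolyC.
  apply: I_mull; apply: (I_div _ _ Iu); apply/mnm_lepP => j.
  rewrite mnmDE mFnE; case: (boolP (j \in F)) => jF.
    by have := le_mdeg u j; rewrite muln1; lia.
  rewrite muln0 add0n; case: (leqP (u j) (w j)) => // ltj; exfalso.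
  move: (wD j); rewrite (negbTE jF) muln0 => wj.
  by apply: Hne; exists j; split => //; split; lia.
move=> [HG Hu].
pose k := (\sum_(i < n) absz (a i))%N.
pose w : 'X_{1..n} := [multinom absz (a i + (k * (i \in F))%N%:Z)%R | i < n].
have wD : forall i, (w i)%:Z = a i + (k * (i \in F))%:Z.
  move=> i; rewrite mnmE; case: (boolP (i \in F)) => iF.
    have : (absz (a i) <= k)%N by rewrite /k (bigD1 i) //= leq_addr.
    rewrite muln1; lia.
  have : 0 <= a i by rewrite leNgt; apply/negP => /HG; rewrite (negbTE iF).
  rewrite muln0; lia.
exists ('X_[w], k); split.
  by move=> m; rewrite /= msuppX mem_seq1 => /eqP -> i; exact: wD.
split.
  case=> m; rewrite /= expr0 mulr1 mul0r subr0 xFnE -mpolyXD.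
  move=> /I_mono_div [m0 [Mm0 le0]].
  have [u [mu lu]] := exists_mingen (mdeg m0).+1 m0 (ltnSn _) (@I_gen K n M m0 Mm0).
  have [j [jF [aj0 aj1]]] := Hu u mu.
  have := mnm_lepP (lepm_trans lu le0) j.
  rewrite mnmDE mFnE (negbTE jF) muln0 add0n.
  move: (wD j); rewrite (negbTE jF) muln0; lia.
move=> q Hq; case: (loc_deg_form _ _ _ Hq) => [q0|[c [mq [c0 [qE qD]]]]].
  exists 0, 0%N; rewrite /= q0 scale0r !mul0r subrr mulr0; exact: I0.
exists c, 0%N; rewrite /= qE !xFnE -!scalerAl -!mpolyXD.
have -> : (mq + mF F *+ k = w + mF F *+ q.2)%MM.
  apply/mnmP => i; rewrite !mnmDE !mFnE.
  move: (wD i) (qD i); case: (i \in F); rewrite ?muln1 ?muln0; lia.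
rewrite subrr mulr0; exact: I0.
Qed.
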